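(* For $m,n\geq 0$ and $\lambda,\kappa\in\mathbf{k}$, in $\text{Ш}_e(\mathbf{k})$ we have $$\mathbf{1}^{\otimes(m+1)}\diamond\mathbf{1}^{\otimes(n+1)}=\sum_{r=0}^{\min\{m,n\}}\sum_{i=0}^{r}\binom{m+n-r}{m}\binom{m}{r}\binom{r}{i}\lambda^{r-i}\kappa^i\,\mathbf{1}^{\otimes(m+n+1-r-i)}.$$ Equivalently, $$\mathbf{1}^{\otimes(m+1)}\diamond\mathbf{1}^{\otimes(n+1)}=\sum_{\ell=0}^{2\min\{m,n\}}\sum_{i=0}^{\ell}\binom{m+n-\ell+i}{m}\binom{m}{\ell-i}\binom{\ell-i}{i}\lambda^{\ell-2i}\kappa^i\,\mathbf{1}^{\otimes(m+n+1-\ell)}.$$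
   Context: $\mathbf{k}$ is a commutative unitary ring and $\mathbf{1}$ its identity. $\text{Ш}_e(\mathbf{k})=\bigoplus_{n\geq0}\mathbf{k}^{\otimes(n+1)}=\bigoplus_{n\ge0}\mathbf{k}\,\mathbf{1}^{\otimes(n+1)}$, with product $\diamond$ defined recursively (for a commutative algebra $A$, here $A=\mathbf{k}$) on pure tensors $\mathfrak{a}=a_0\otimes\mathfrak{a}'\in A^{\otimes(m+1)}$, $\mathfrak{b}=b_0\otimes\mathfrak{b}'\in A^{\otimes(n+1)}$ by: $\mathfrak{a}\diamond\mathfrak{b}=a_0b_0$ if $m=n=0$; $a_0b_0\otimes\mathfrak{b}'$ if $m=0,n\ge1$; $a_0b_0\otimes\mathfrak{a}'$ if $m\ge1,n=0$; and for $m,n\ge1$, $a_0b_0\otimes\big(\mathfrak{a}'\diamond(1\otimes\mathfrak{b}')+(1\otimes\mathfrak{a}')\diamond\mathfrak{b}'+\lambda(\mathfrak{a}'\diamond\mathfrak{b}')\big)+\kappa a_0b_0(\mathfrak{a}'\diamond\mathfrak{b}')$. Binomial coefficients with out-of-range lower index are $0$. *)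

(* Defs.v *)
From HB Require Import structures.
From mathcomp Require Import all_boot all_order all_algebra.
Set Implicit Arguments. Unset Strict Implicit. Unset Printing Implicit Defensive.
Import GRing.Theory.
Local Open Scope ring_scope.

(* Ш_e(k) = ⊕_{n>=0} k^{⊗(n+1)} = ⊕_n k 1^{⊗(n+1)} is modelled as {poly R}:
   the basis vector 1^{⊗(n+1)} is 'X^n, and the operation x ↦ 1 ⊗ x
   (prepending a tensor factor 1) is multiplication by 'X. *)

Fixpoint shd (R : comNzRingType) (lam kap : R) (m : nat) : nat -> {poly R} :=
  match m with
  | 0 => fun n => 'X^n
  | m'.+1 => fix inner (n : nat) : {poly R} :=
      match n with
      | 0 => 'X^(m'.+1)
      | n'.+1 =>
          (shd lam kap m' n'.+1 + inner n' + lam *: shd lam kap m' n') * 'X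
          + kap *: shd lam kap m' n'
      end
  end.

Definition diamond (R : comNzRingType) (lam kap : R) (p q : {poly R}) : {poly R} :=
  \sum_(i < size p) \sum_(j < size q) (p`_i * q`_j) *: shd lam kap i j.

Definition one_tens (R : comNzRingType) (n : nat) : {poly R} := 'X^n.

(* Main.v *)
Require Import Defs.
From HB Require Import structures.
From mathcomp Require Import all_boot all_order all_algebra.
From mathcomp Require Import ring zify.
Import GRing.Theory.
Local Open Scope ring_scope.

Section S.
Variable (R : comNzRingType) (lam kap : R).
Let c : {poly R} := lam *: 'X + kap%:P.
Definition tt m n r : {poly R} :=
  ('C(m + n - r, m) * 'C(m, r))%:R * c ^+ r * 'X^(m + n - r.*2).
Definition DD m n := \sum_(r < m.+1) tt m n r.

Lemma tt_step m n r :
  tt m.+1 n.+1 r.+1 = 'X * tt m n.+1 r.+1 + 'X * tt m.+1 n r.+1 + c * tt m n r.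
Proof.
rewrite /tt.
have e1 : (m.+1 + n.+1 - r.+1.*2 = m + n - r.*2)%N by lia.
have e2 : (m + n.+1 - r.+1.*2 = (m + n - r.*2).-1)%N by lia.
have e3 : (m.+1 + n - r.+1.*2 = (m + n - r.*2).-1)%N by lia.
have f2 : (m + n.+1 - r.+1 = m + n - r)%N by lia.
have f3 : (m.+1 + n - r.+1 = m + n - r)%N by lia.
rewrite e1 e2 e3 f2 f3.
have hA : ('C(m.+1 + n.+1 - r.+1, m.+1) * 'C(m.+1, r.+1) =
   'C(m + n - r, m) * 'C(m, r.+1) + 'C(m + n - r, m.+1) * 'C(m.+1, r.+1)
   + 'C(m + n - r, m) * 'C(m, r))%N.
  case: (leqP r (m+n)) => hr.
    have -> : (m.+1 + n.+1 - r.+1 = (m + n - r).+1)%N by lia.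
    rewrite (binS (m+n-r) m) (binS m r); ring.
  rewrite (@bin_small m.+1 r.+1) ?(@bin_small m r.+1) ?(@bin_small m r); lia.
rewrite hA !natrD exprS.
case E: (m + n - r.*2)%N => [|e] /=.
  have z1 : ('C(m + n - r, m) * 'C(m, r.+1) = 0)%N.
    case: (leqP r.+1 m) => h; last by rewrite (bin_small h) muln0.
    by rewrite bin_small ?mul0n //; lia.
  have z2 : ('C(m + n - r, m.+1) * 'C(m.+1, r.+1) = 0)%N.
    case: (leqP r.+1 m.+1) => h; last by rewrite (bin_small h) muln0.
    by rewrite bin_small ?mul0n //; lia.
  rewrite z1 z2 !mul0r !add0r !mulr0 !add0r; ring.
rewrite !exprS; ring.
Qed.
Lemma tt_step0 m n :
  tt m.+1 n.+1 0 = 'X * tt m n.+1 0 + 'X * tt m.+1 n 0.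
Proof.
rewrite /tt !subn0 !bin0 !muln1 !expr0 !mulr1.
have -> : (m.+1 + n.+1 = (m + n.+1).+1)%N by lia.
have -> : (m.+1 + n = (m + n.+1))%N by lia.
rewrite binS natrD exprS; ring.
Qed.

Lemma DD0n n : DD 0 n = 'X^n.
Proof. by rewrite /DD big_ord1 /tt !subn0 !bin0 expr0 mulr1 mul1r. Qed.

Lemma DDm0 m : DD m 0 = 'X^m.
Proof.
rewrite /DD big_ord_recl big1 ?addr0.
  by rewrite /tt !subn0 addn0 binn bin0 expr0 mulr1 mul1r.
move=> i _; rewrite /tt /bump /= bin_small ?mul0n ?mul0r ?mulr0 //.
have := ltn_ord i; rewrite /bump leq0n add1n; lia.
Qed.

Lemma DDS m n :
  DD m.+1 n.+1 = 'X * DD m n.+1 + 'X * DD m.+1 n + c * DD m n.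
Proof.
have E1 : \sum_(r < m.+1) tt m n.+1 r = tt m n.+1 0 + \sum_(r < m.+1) tt m n.+1 r.+1.
  rewrite big_ord_recl (big_ord_recr m) /= [X in _ = _ + (_ + X)](_ : _ = 0) ?addr0 //.
  by rewrite /tt (@bin_small m m.+1) // muln0 !mul0r.
have E2 : \sum_(r < m.+2) tt m.+1 n r = tt m.+1 n 0 + \sum_(r < m.+1) tt m.+1 n r.+1.
  by rewrite big_ord_recl.
have E3 : \sum_(r < m.+2) tt m.+1 n.+1 r = tt m.+1 n.+1 0 + \sum_(r < m.+1) tt m.+1 n.+1 r.+1.
  by rewrite big_ord_recl.
rewrite /DD E1 E2 E3 tt_step0.
under eq_bigr do rewrite tt_step.
rewrite !big_split /= !mulr_sumr !mulrDr -!mulr_sumr; ring.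
Qed.

Lemma shd_DD m n : shd lam kap m n = DD m n.
Proof.
elim: m n => [|m IHm] n; first by rewrite DD0n.
elim: n => [|n IHn]; first by rewrite DDm0.
have -> : shd lam kap m.+1 n.+1 = (shd lam kap m n.+1 + shd lam kap m.+1 n + lam *: shd lam kap m n) * 'X + kap *: shd lam kap m n by [].
rewrite IHm IHn DDS /c -!mul_polyC IHm; ring.
Qed.
Lemma diamondXX m n : diamond lam kap 'X^m 'X^n = shd lam kap m n.
Proof.
rewrite /diamond size_polyXn big_ord_recr /= big1 ?add0r; last first.
  move=> i _; rewrite big1 // => j _; rewrite coefXn ltn_eqF ?mul0r ?scale0r //.
rewrite size_polyXn big_ord_recr /= big1 ?add0r; last first.
  move=> j _; rewrite [_`_ j]coefXn ltn_eqF ?mulr0 ?scale0r //.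
by rewrite !coefXn !eqxx mulr1 scale1r.
Qed.
End S.

Lemma cut_sum (V : zmodType) a b (F : nat -> V) : (a <= b)%N ->
  (forall r, (a <= r < b)%N -> F r = 0) ->
  \sum_(0 <= r < b) F r = \sum_(0 <= r < a) F r.
Proof.
move=> hab hF; rewrite [LHS](big_cat_nat (leq0n a) hab) /=.
rewrite [X in _ + X = _]big_nat_cond [X in _ + X = _]big1 ?addr0 // => r /andP[h _]; exact: hF.
Qed.

Lemma anti (V : zmodType) (H : nat -> nat -> V) N :
  \sum_(0 <= l < N) \sum_(0 <= i < l.+1) H (l - i)%N i =
  \sum_(0 <= r < N) \sum_(0 <= i < N - r) H r i.
Proof.
elim: N => [|N IH]; first by rewrite !big_geq.
rewrite big_nat_recr //= IH.
rewrite (@big_nat_widen _ _ _ 0 N N.+1) //.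
have -> : \sum_(0 <= r < N.+1) \sum_(0 <= i < N.+1 - r) H r i =
  \sum_(0 <= r < N.+1) (\sum_(0 <= i < N - r) H r i + H r (N - r)%N).
  apply: eq_big_nat => r /andP[_ hr].
  have -> : (N.+1 - r = (N - r).+1)%N by lia.
  by rewrite big_nat_recr.
rewrite big_split /=.
congr (_ + _).
  rewrite big_mkcond /=; apply: eq_big_nat => r /andP[_ hr].
  case: ltnP => h //.
  have -> : r = N by lia.
  by rewrite subnn big_geq.
rewrite big_nat_rev /=; apply: eq_big_nat => i /andP[_ hi].
by rewrite add0n subSS; congr (H _ _); lia.
Qed.

Theorem proposition3p4 (R : comNzRingType) (lam kap : R) (m n : nat) :
  diamond lam kap (one_tens R m) (one_tens R n) =
    \sum_(0 <= r < (minn m n).+1) \sum_(0 <= i < r.+1)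
      ('C(m + n - r, m) * 'C(m, r) * 'C(r, i))%:R * (lam ^+ (r - i) * kap ^+ i)
        *: one_tens R (m + n - r - i)
  /\
  diamond lam kap (one_tens R m) (one_tens R n) =
    \sum_(0 <= l < (minn m n).*2.+1) \sum_(0 <= i < l.+1)
      ('C(m + n - l + i, m) * 'C(m, l - i) * 'C(l - i, i))%:R
        * (lam ^+ (l - i.*2) * kap ^+ i)
        *: one_tens R (m + n - l).
Proof.
set H := fun r i => ('C(m + n - r, m) * 'C(m, r) * 'C(r, i))%:R * (lam ^+ (r - i) * kap ^+ i)
        *: one_tens R (m + n - r - i).
have first : diamond lam kap (one_tens R m) (one_tens R n) =
   \sum_(0 <= r < (minn m n).+1) \sum_(0 <= i < r.+1) H r i.
  rewrite /one_tens diamondXX shd_DD /DD -(big_mkord xpredT (tt R lam kap m n)).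
  rewrite (@cut_sum _ (minn m n).+1); last 2 first.
  - by rewrite ltnS geq_minl.
  - move=> r /andP[h1 h2]; rewrite /tt (@bin_small (m + n - r)) ?mul0n ?mul0r //.
    lia.
  apply: eq_big_nat => r /andP[_ hr]; move: hr; rewrite ltnS leq_min => /andP[hm hn].
  rewrite /tt exprDn [RHS]big_mkord mulr_sumr mulr_suml.
  apply: eq_bigr => i _; have hi := ltn_ord i.
  rewrite /H /one_tens.
  have -> : (m + n - r - i = (r - i) + (m + n - r.*2))%N by lia.
  rewrite exprD exprZn -rmorphXn -[_ *+ 'C(r, i)]mulr_natl -!mul_polyC !polyCM !polyC_natr !natrM.
  ring.
split => //.
rewrite first.
have -> : \sum_(0 <= l < (minn m n).*2.+1) \sum_(0 <= i < l.+1)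
      ('C(m + n - l + i, m) * 'C(m, l - i) * 'C(l - i, i))%:R
        * (lam ^+ (l - i.*2) * kap ^+ i) *: one_tens R (m + n - l)
   = \sum_(0 <= l < (minn m n).*2.+1) \sum_(0 <= i < l.+1) H (l - i)%N i.
  apply: eq_big_nat => l /andP[_ hl]; apply: eq_big_nat => i /andP[_ hi].
  have hmn : ((minn m n).*2 <= m + n)%N by rewrite -addnn leq_add ?geq_minl ?geq_minr.
  rewrite /H.
  have -> : (m + n - l + i = m + n - (l - i))%N by lia.
  have -> : (l - i.*2 = l - i - i)%N by lia.
  have -> : (m + n - l = m + n - (l - i) - i)%N by lia.
  by [].
rewrite anti.
rewrite (@cut_sum _ (minn m n).+1 (minn m n).*2.+1); last 2 first.
- by rewrite ltnS -addnn leq_addr.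
- move=> r /andP[h1 h2]; rewrite big1_seq // => i _.
  rewrite /H.
  have -> : ('C(m + n - r, m) * 'C(m, r) = 0)%N.
    case: (leqP r m) => h; last by rewrite (@bin_small m r) ?muln0.
    by rewrite bin_small ?mul0n //; lia.
  by rewrite !mul0n mul0r scale0r.
apply: eq_big_nat => r /andP[_ hr]; move: hr; rewrite ltnS => hr.
rewrite (@cut_sum _ r.+1); last 2 first.
- move: hr; rewrite -addnn; lia.
- move=> i /andP[h1 _]; rewrite /H (@bin_small r i) ?muln0 ?mul0r ?scale0r //.
by apply: eq_bigr => i _; rewrite /H.
Qed.
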